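(* Let $A=\langle Q,\delta,\gamma,F\rangle$ be a finitely supported pomset automaton. Then for every $q\in Q$ there exists a pomset automaton $A_q$ with finitely many states and a state $q'$ of $A_q$ such that $L_A(q)=L_{A_q}(q')$.
   Context: Fix a finite alphabet $\Sigma$; pomsets are isomorphism classes of $\Sigma$-labelled posets, $1$ the empty pomset, $a\in\Sigma$ the one-point pomset, $\cdot$ and $\parallel$ sequential and parallel composition, $\mathsf{Pom}^{\mathsf{sp}}$ the smallest set containing $1$ and all $a$ closed under both. A PA is $A=\langle Q,\delta,\gamma,F\rangle$ with $F\subseteq Q$, $\delta:Q\times\Sigma\to Q$, $\gamma:Q^3\to Q$, with states $\bot\notin F$, $\top\in F$ such that $\delta(\bot,a)=\delta(\top,a)=\bot$ and $\gamma(\bot,r,s)=\gamma(\top,r,s)=\bot$. Traces: the smallest relation with $q\xrightarrow{1}_A q$; $q\xrightarrow{a}_A\delta(q,a)$; $q\xrightarrow{U}_A q''\xrightarrow{V}_A q'$ implies $q\xrightarrow{U\cdot V}_A q'$; $r\xrightarrow{U}_A r'\in F$, $s\xrightarrow{V}_A s'\in F$ imply $q\xrightarrow{U\parallel V}_A\gamma(q,r,s)$. $L_A(q)=\{U:\exists q'\in F.\ q\xrightarrow{U}_A q'\}$. The trace dependency relation $\preceq_A$ is the smallest preorder on $Q$ with $r,s\preceq_A q$ whenever $\gamma(q,r,s)\neq\bot$, $\delta(q,a)\preceq_A q$ for all $a$, and $\gamma(q,r,s)\preceq_A q$ for all $r,s$. The support $\pi_A(q)$ is the smallest $\preceq_A$-downward-closed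 subset of $Q$ containing $q$; $A$ is finitely supported if $\pi_A(q)$ is finite for every $q$. *)

(* Defs.v *)
From Stdlib Require List.
From mathcomp Require Import all_boot.
Set Implicit Arguments. Unset Strict Implicit. Unset Printing Implicit Defensive.

(* Pomsets are isomorphism classes of these; we work with representatives and
   take all languages up to isomorphism (see [pom_iso] and [PA_lang]). *)
Record lposet (Sigma : Type) := LPoset {
  lp_size : nat;
  lp_ord  : rel 'I_lp_size;
  lp_lab  : 'I_lp_size -> Sigma }.
Arguments lp_size {Sigma} l.
Arguments lp_ord {Sigma} l _ _.
Arguments lp_lab {Sigma} l _.

Definition is_poset {Sigma : Type} (U : lposet Sigma) : Prop :=
  reflexive (lp_ord U) /\ transitive (lp_ord U) /\ antisymmetric (lp_ord U).

Definition pom_iso (Sigma : Type) (U V : lposet Sigma) : Prop :=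
  exists f : 'I_(lp_size U) -> 'I_(lp_size V),
    bijective f /\
    (forall x y, lp_ord V (f x) (f y) = lp_ord U x y) /\
    (forall x, lp_lab V (f x) = lp_lab U x).

Lemma ord0_empty : 'I_0 -> False. Proof. by case. Qed.

Definition pom_one (Sigma : Type) : lposet Sigma :=
  @LPoset Sigma 0 (fun _ _ => true) (fun i => False_rect _ (ord0_empty i)).

Definition pom_letter (Sigma : Type) (a : Sigma) : lposet Sigma :=
  @LPoset Sigma 1 (fun _ _ => true) (fun _ => a).

Definition sum_lab {Sigma : Type} (U V : lposet Sigma)
  (x : 'I_(lp_size U + lp_size V)) : Sigma :=
  match split x with inl i => lp_lab U i | inr j => lp_lab V j end.

Arguments sum_lab {Sigma} U V x.

Definition pom_seq (Sigma : Type) (U V : lposet Sigma) : lposet Sigma :=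
  @LPoset Sigma (lp_size U + lp_size V)
    (fun x y => match split x, split y with
                | inl i, inl j => lp_ord U i j
                | inr i, inr j => lp_ord V i j
                | inl _, inr _ => true
                | inr _, inl _ => false end)
    (sum_lab U V).

Definition pom_par (Sigma : Type) (U V : lposet Sigma) : lposet Sigma :=
  @LPoset Sigma (lp_size U + lp_size V)
    (fun x y => match split x, split y with
                | inl i, inl j => lp_ord U i j
                | inr i, inr j => lp_ord V i j
                | _, _ => false end)
    (sum_lab U V).

Record PA (Sigma : Type) (Q : Type) := MkPA {
  pa_delta : Q -> Sigma -> Q;
  pa_gamma : Q -> Q -> Q -> Q;
  pa_F     : Q -> Prop;
  pa_bot   : Q;
  pa_top   : Q;
  pa_bot_notF : ~ pa_F pa_bot;
  pa_top_F    : pa_F pa_top;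
  pa_delta_bot : forall a, pa_delta pa_bot a = pa_bot;
  pa_delta_top : forall a, pa_delta pa_top a = pa_bot;
  pa_gamma_bot : forall r s, pa_gamma pa_bot r s = pa_bot;
  pa_gamma_top : forall r s, pa_gamma pa_top r s = pa_bot }.

Inductive PA_trace (Sigma Q : Type) (A : PA Sigma Q) :
    Q -> lposet Sigma -> Q -> Prop :=
  | tr_one q : PA_trace A q (pom_one Sigma) q
  | tr_letter q a : PA_trace A q (pom_letter a) (pa_delta A q a)
  | tr_seq q q'' q' U V :
      PA_trace A q U q'' -> PA_trace A q'' V q' ->
      PA_trace A q (pom_seq U V) q'
  | tr_par q r r' s s' U V :
      PA_trace A r U r' -> pa_F A r' ->
      PA_trace A s V s' -> pa_F A s' ->
      PA_trace A q (pom_par U V) (pa_gamma A q r s).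

Definition PA_lang (Sigma Q : Type) (A : PA Sigma Q) (q : Q)
    (U : lposet Sigma) : Prop :=
  exists (U' : lposet Sigma) (q' : Q),
    pa_F A q' /\ PA_trace A q U' q' /\ pom_iso U' U.

(* trace dependency relation: the smallest preorder with the given generators;
   [PA_dep A p q] means p <=_A q *)
Inductive PA_dep (Sigma Q : Type) (A : PA Sigma Q) : Q -> Q -> Prop :=
  | dep_refl q : PA_dep A q q
  | dep_trans p q r : PA_dep A p q -> PA_dep A q r -> PA_dep A p r
  | dep_gamma_l q r s : pa_gamma A q r s <> pa_bot A -> PA_dep A r q
  | dep_gamma_r q r s : pa_gamma A q r s <> pa_bot A -> PA_dep A s q
  | dep_delta q a : PA_dep A (pa_delta A q a) q
  | dep_gamma q r s : PA_dep A (pa_gamma A q r s) q.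

(* support pi_A(q): smallest <=_A-downward-closed set containing q *)
Definition PA_support (Sigma Q : Type) (A : PA Sigma Q) (q : Q) : Q -> Prop :=
  fun p => PA_dep A p q.

Definition finite_set (Q : Type) (S : Q -> Prop) : Prop :=
  exists l : list Q, forall p, S p -> List.In p l.

Definition finitely_supported (Sigma Q : Type) (A : PA Sigma Q) : Prop :=
  forall q, finite_set (PA_support A q).

(* Main.v *)
Require Import Defs.
From mathcomp Require Import all_boot.
From Stdlib Require Import ClassicalEpsilon.
Set Implicit Arguments. Unset Strict Implicit.

Definition emb (Sigma Q : Type) (A : PA Sigma Q) (S : Q -> Prop) (l : list Q)
  (x : option (option 'I_(size l))) : Q :=
  match x with
  | None => pa_bot A
  | Some None => pa_top A
  | Some (Some i) =>
      if excluded_middle_informative (S (nth (pa_bot A) l i))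
      then nth (pa_bot A) l i else pa_bot A
  end.

Definition ret (Sigma Q : Type) (A : PA Sigma Q) (l : list Q) (p : Q)
  : option (option 'I_(size l)) :=
  match excluded_middle_informative (p = pa_bot A) with
  | left _ => None
  | right _ =>
    match excluded_middle_informative (p = pa_top A) with
    | left _ => Some None
    | right _ =>
      match excluded_middle_informative
              (exists i : 'I_(size l), nth (pa_bot A) l i = p) with
      | left H => Some (Some (proj1_sig (constructive_indefinite_description _ H)))
      | right _ => None
      end
    end
  end.

Lemma ret_bot Sigma Q (A : PA Sigma Q) l : ret A l (pa_bot A) = None.
Proof. rewrite /ret; by case: excluded_middle_informative. Qed.

Lemma nth_listnth (T : Type) (x0 : T) (l : list T) k :
  nth x0 l k = List.nth k l x0.
Proof. by elim: l k => [|x l IH] [|k] //=. Qed.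

Lemma emb_ret Sigma Q (A : PA Sigma Q) (S : Q -> Prop) (l : list Q) p :
  (forall p, S p -> List.In p l) ->
  (S p \/ p = pa_bot A \/ p = pa_top A) -> emb A S (ret A l p) = p.
Proof.
move=> Hl Hp; rewrite /ret.
case: excluded_middle_informative => [->//|nb].
case: excluded_middle_informative => [->//|nt].
case: excluded_middle_informative => [H|nH].
  case: constructive_indefinite_description => i /= Hi.
  rewrite /emb Hi; case: excluded_middle_informative => //.
  by case: Hp => [//|[]].
exfalso; case: Hp => [Sp|[]//].
have := Hl _ Sp; move/(List.In_nth l p (pa_bot A)) => [k [Hk Hn]].
apply: nH; have Hk' : k < size l by apply/ltP.
exists (Ordinal Hk'); rewrite -Hn /=; exact: nth_listnth.
Qed.

Definition fpa (Sigma Q : Type) (A : PA Sigma Q) (S : Q -> Prop) (l : list Q)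
  : PA Sigma (option (option 'I_(size l))).
refine (@MkPA Sigma _
  (fun x a => ret A l (pa_delta A (emb A S x) a))
  (fun x y z => ret A l (pa_gamma A (emb A S x) (emb A S y) (emb A S z)))
  (fun x => pa_F A (emb A S x)) None (Some None) _ _ _ _ _ _).
- exact: pa_bot_notF.
- exact: pa_top_F.
- by move=> a /=; rewrite pa_delta_bot ret_bot.
- by move=> a /=; rewrite pa_delta_top ret_bot.
- by move=> r s /=; rewrite pa_gamma_bot ret_bot.
- by move=> r s /=; rewrite pa_gamma_top ret_bot.
Defined.

Lemma trace_bot Sigma Q (A : PA Sigma Q) p U p' :
  PA_trace A p U p' -> p = pa_bot A -> p' = pa_bot A.
Proof.
elim => //=.
- by move=> q a ->; rewrite pa_delta_bot.
- by move=> q q'' q' U' V _ IH1 _ IH2 H; apply: IH2; apply: IH1.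
- by move=> q r r' s s' U' V _ _ _ _ _ _ ->; rewrite pa_gamma_bot.
Qed.

Lemma emb_T Sigma Q (A : PA Sigma Q) (S : Q -> Prop) (l : list Q) (x : option (option 'I_(size l))) :
  S (emb A S x) \/ emb A S x = pa_bot A \/ emb A S x = pa_top A.
Proof.
case: x => [[i|]|] /=; auto.
by case: excluded_middle_informative; auto.
Qed.

Lemma claim2 Sigma Q (A : PA Sigma Q) q (l : list Q) :
  (forall p, PA_dep A p q -> List.In p l) ->
  forall x U x', PA_trace (fpa A (fun p => PA_dep A p q) l) x U x' ->
  PA_trace A (emb A (fun p => PA_dep A p q) x) U (emb A (fun p => PA_dep A p q) x').
Proof.
move=> Hl x U x'; elim => /=.
- move=> ?; exact: tr_one.
- move=> y a; rewrite emb_ret //; last first.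
    case: (emb_T A (fun p => PA_dep A p q) y) => [H|[->|->]].
    + left; apply: dep_trans H; exact: dep_delta.
    + by right; left; rewrite pa_delta_bot.
    + by right; left; rewrite pa_delta_top.
  exact: tr_letter.
- move=> ? ? ? ? ? _ H1 _ H2; exact: tr_seq H1 H2.
- move=> y r r' s s' U' V _ H1 F1 _ H2 F2.
  rewrite emb_ret //; last first.
    case: (emb_T A (fun p => PA_dep A p q) y) => [H|[->|->]].
    + left; apply: dep_trans H; exact: dep_gamma.
    + by right; left; rewrite pa_gamma_bot.
    + by right; left; rewrite pa_gamma_top.
  exact: tr_par H1 F1 H2 F2.
Qed.

Lemma claim1 Sigma Q (A : PA Sigma Q) q (l : list Q) :
  (forall p, PA_dep A p q -> List.In p l) ->
  forall p U p', PA_trace A p U p' -> PA_dep A p q ->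
  p' = pa_bot A \/ (PA_dep A p' q /\
    PA_trace (fpa A (fun p => PA_dep A p q) l) (ret A l p) U (ret A l p')).
Proof.
move=> Hl p U p'; elim.
- move=> r Hr; right; split => //; exact: tr_one.
- move=> r a Hr; right; split.
    apply: dep_trans Hr; exact: dep_delta.
  have := @tr_letter _ _ (fpa A (fun p => PA_dep A p q) l) (ret A l r) a.
  by rewrite /= emb_ret //; left.
- move=> r r'' r' U1 V1 T1 IH1 T2 IH2 Hr.
  case: (IH1 Hr) => [Hb|[Hd Ht]].
    by left; apply: trace_bot T2 Hb.
  case: (IH2 Hd) => [Hb|[Hd' Ht']]; first by left.
  by right; split => //; apply: tr_seq Ht Ht'.
- move=> r r1 r1' s s' U1 V1 T1 IH1 F1 T2 IH2 F2 Hr.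
  case: (excluded_middle_informative (pa_gamma A r r1 s = pa_bot A)) => Hg.
    by left.
  have Hr1 : PA_dep A r1 q by apply: dep_trans Hr; exact: dep_gamma_l Hg.
  have Hs : PA_dep A s q by apply: dep_trans Hr; exact: dep_gamma_r Hg.
  case: (IH1 Hr1) => [Hb|[Hd1 Ht1]].
    by case: (@pa_bot_notF _ _ A); rewrite -Hb.
  case: (IH2 Hs) => [Hb|[Hd2 Ht2]].
    by case: (@pa_bot_notF _ _ A); rewrite -Hb.
  right; split; first by apply: dep_trans Hr; exact: dep_gamma.
  have F1' : pa_F (fpa A (fun p => PA_dep A p q) l) (ret A l r1')
    by rewrite /= emb_ret //; left.
  have F2' : pa_F (fpa A (fun p => PA_dep A p q) l) (ret A l s')
    by rewrite /= emb_ret //; left.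
  have := tr_par (ret A l r) Ht1 F1' Ht2 F2'.
  by rewrite /= !emb_ret //; left.
Qed.

Theorem mainTheorem6 (Sigma : finType) (Q : Type) (A : PA Sigma Q) :
  finitely_supported A ->
  forall q : Q,
    exists (Q' : finType) (Aq : PA Sigma Q') (q' : Q'),
      forall U : lposet Sigma, PA_lang A q U <-> PA_lang Aq q' U.
Proof.
move=> Hfs q; case: (Hfs q) => l Hl.
exists (option (option 'I_(size l))), (fpa A (fun p => PA_dep A p q) l), (ret A l q).
move=> U; split.
- move=> [U' [q' [Fq [Tr Iso]]]].
  case: (claim1 Hl Tr (dep_refl A q)) => [Hb|[Hd Ht]].
    by case: (@pa_bot_notF _ _ A); rewrite -Hb.
  exists U', (ret A l q'); split; last by split.
  by rewrite /= emb_ret //; left.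
- move=> [U' [x' [Fx [Tr Iso]]]].
  have := claim2 Hl Tr; rewrite emb_ret //; last by left; exact: dep_refl.
  move=> Tr'; exists U', (emb A (fun p => PA_dep A p q) x'); split => //.
Qed.
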